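(* Let $a,b,e\in\mathbb{R}$ and let $\alpha_i(t)$ ($i=1,\dots,5$) be scalar continuous functions (not necessarily odd). Consider the systems $$\text{(S5)}\quad\begin{aligned}\dot x&=(ax+by+xz)(1+\alpha_1(t))+x(a+z)\alpha_2(t)+y\alpha_3(t),\\ \dot y&=(-bx+ay+yz)(1+\alpha_1(t))+y(a+z)\alpha_2(t)-x\alpha_3(t),\\ \dot z&=(ez-x^2-y^2-z^2)(1+\alpha_1(t)+\alpha_2(t));\end{aligned}$$ $$\text{(S6)}\quad\begin{aligned}\dot x&=(ax+by+xz)(1+\alpha_1(t))+x(a+z)\alpha_2(t)+y\alpha_3(t)-y(x^2+y^2)(4az+x^2+y^2+2z^2)\alpha_4(t),\\ \dot y&=(-bx+ay+yz)(1+\alpha_1(t))+y(a+z)\alpha_2(t)-x\alpha_3(t)+x(x^2+y^2)(4az+x^2+y^2+2z^2)\alpha_4(t),\\ \dot z&=-(2az+x^2+y^2+z^2)(1+\alpha_1(t)+\alpha_2(t));\end{aligned}$$ $$\text{(S7)}\quad\begin{aligned}\dot x&=(ax+xz)(1+\alpha_1(t))+y\alpha_2(t)+y(4az+x^2+y^2+2z^2)\big(x^2\alpha_3(t)+xy\alpha_4(t)+y^2\alpha_5(t)\big),\\ \dot y&=(ay+yz)(1+\alpha_1(t))-x\alpha_2(t)-x(4az+x^2+y^2+2z^2)\big(x^2\alpha_3(t)+xy\alpha_4(t)+y^2\alpha_5(t)\big),\\ \dot z&=-(2az+x^2+y^2+z^2)(1+\alpha_1(t)).\end{aligned}$$ (i)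 If $e=0$ and there is a constant $l>-1$ with $\alpha_1(t)+\alpha_2(t)\ge l$ for all $t\ge0$, then the solution $x=y=z=0$ of (S5) is unstable in the sense of Lyapunov. (ii) If $a=0$ and there is a constant $l>-1$ with $\alpha_1(t)+\alpha_2(t)\ge l$ for all $t\ge0$, then the solution $x=y=z=0$ of (S6) is unstable in the sense of Lyapunov. (iii) If $a=0$ and there is a constant $l>-1$ with $\alpha_1(t)\ge l$ for all $t\ge0$, then the solution $x=y=z=0$ of (S7) is unstable in the sense of Lyapunov. *)

(* Defs.v *)
From Stdlib Require Import Reals.
From Coquelicot Require Import Coquelicot.
Open Scope R_scope.

Definition field3 := R -> R -> R -> R -> R.

(* (x,y,z) is a solution of x' = F, y' = G, z' = H on [0, T)  (T may be any
   real; solutions need not be global). *)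
Definition is_sol3 (F G H : field3) (T : R) (x y z : R -> R) : Prop :=
  forall t, 0 <= t < T ->
    is_derive x t (F t (x t) (y t) (z t)) /\
    is_derive y t (G t (x t) (y t) (z t)) /\
    is_derive z t (H t (x t) (y t) (z t)).

Definition norm3 (x y z : R) : R := sqrt (x ^ 2 + y ^ 2 + z ^ 2).

Definition lyapunov_stable0 (F G H : field3) : Prop :=
  forall eps, 0 < eps -> exists delta, 0 < delta /\
    forall T x y z, is_sol3 F G H T x y z ->
      norm3 (x 0) (y 0) (z 0) < delta ->
      forall t, 0 <= t < T -> norm3 (x t) (y t) (z t) < eps.

Definition lyapunov_unstable0 (F G H : field3) : Prop := ~ lyapunov_stable0 F G H.

Definition S5x (a b : R) (al1 al2 al3 : R -> R) : field3 := fun t x y z =>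
  (a*x + b*y + x*z) * (1 + al1 t) + x*(a + z) * al2 t + y * al3 t.
Definition S5y (a b : R) (al1 al2 al3 : R -> R) : field3 := fun t x y z =>
  (- b*x + a*y + y*z) * (1 + al1 t) + y*(a + z) * al2 t - x * al3 t.
Definition S5z (e : R) (al1 al2 : R -> R) : field3 := fun t x y z =>
  (e*z - x^2 - y^2 - z^2) * (1 + al1 t + al2 t).

Definition S6x (a b : R) (al1 al2 al3 al4 : R -> R) : field3 := fun t x y z =>
  (a*x + b*y + x*z) * (1 + al1 t) + x*(a + z) * al2 t + y * al3 t
  - y * (x^2 + y^2) * (4*a*z + x^2 + y^2 + 2*z^2) * al4 t.
Definition S6y (a b : R) (al1 al2 al3 al4 : R -> R) : field3 := fun t x y z =>
  (- b*x + a*y + y*z) * (1 + al1 t) + y*(a + z) * al2 t - x * al3 t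
  + x * (x^2 + y^2) * (4*a*z + x^2 + y^2 + 2*z^2) * al4 t.
Definition S6z (a : R) (al1 al2 : R -> R) : field3 := fun t x y z =>
  - (2*a*z + x^2 + y^2 + z^2) * (1 + al1 t + al2 t).

Definition S7x (a : R) (al1 al2 al3 al4 al5 : R -> R) : field3 := fun t x y z =>
  (a*x + x*z) * (1 + al1 t) + y * al2 t
  + y * (4*a*z + x^2 + y^2 + 2*z^2) * (x^2 * al3 t + x*y * al4 t + y^2 * al5 t).
Definition S7y (a : R) (al1 al2 al3 al4 al5 : R -> R) : field3 := fun t x y z =>
  (a*y + y*z) * (1 + al1 t) - x * al2 t
  - x * (4*a*z + x^2 + y^2 + 2*z^2) * (x^2 * al3 t + x*y * al4 t + y^2 * al5 t).
Definition S7z (a : R) (al1 : R -> R) : field3 := fun t x y z =>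
  - (2*a*z + x^2 + y^2 + z^2) * (1 + al1 t).

Definition cont (f : R -> R) : Prop := forall t, continuity_pt f t.

(* Main.v *)
Require Import Defs.
From Stdlib Require Import Reals Lra.
From Coquelicot Require Import Coquelicot.
Open Scope R_scope.
From Stdlib Require Import Lra.

Lemma key (c : R -> R) (m : R) :
  (forall t, continuity_pt c t) -> 0 < m -> (forall t, 0 <= t -> c t >= m) ->
  forall eps delta, 0 < eps -> 0 < delta ->
  exists T d t (z : R -> R), 0 < d < delta /\ 0 <= t < T /\ z 0 = - d /\
    (forall s, 0 <= s < T -> is_derive z s (- (z s)^2 * c s)) /\ eps <= Rabs (z t).
Proof.
  intros Hc Hm Hcm eps delta He Hd.
  assert (Hcc : forall t, continuous c t) by (intro t; apply continuity_pt_filterlim; auto).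
  assert (Hex : forall a b, ex_RInt c a b).
  { intros a b; apply (@ex_RInt_continuous R_CompleteNormedModule); intros; apply Hcc. }
  set (C := fun t => RInt c 0 t).
  assert (HD : forall t, is_derive C t (c t)).
  { intro t; apply is_derive_RInt with (a := 0); [|apply Hcc].
    apply filter_forall; intro b; apply RInt_correct, Hex. }
  assert (Hdiff : forall a b, 0 <= a <= b -> C b - C a >= m * (b - a)).
  { intros a b Hab. unfold C.
    rewrite <- (RInt_Chasles c 0 a b) by apply Hex.
    assert (RInt (fun _ => m) a b <= RInt c a b).
    { apply RInt_le; try lra; try apply Hex. apply ex_RInt_const.
      intros x Hx; apply Rge_le, Hcm; lra. }
    rewrite RInt_const in H. unfold scal in H; simpl in H; unfold mult in H; simpl in H.
    unfold plus; simpl. lra. }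
  assert (HC0 : C 0 = 0) by (unfold C; apply (@RInt_point R_CompleteNormedModule)).
  set (T := 2 / (m * delta)).
  assert (HT : 0 < T) by (unfold T; apply Rdiv_lt_0_compat; [lra| apply Rmult_lt_0_compat; lra]).
  assert (HCT : C T >= 2 / delta).
  { pose proof (Hdiff 0 T ltac:(lra)). rewrite HC0 in H.
    replace (2/delta) with (m * (T - 0)); [lra|]. unfold T; field; lra. }
  assert (HcontC : continuity_pt C T).
  { apply continuity_pt_filterlim. apply (@ex_derive_continuous R_AbsRing R_NormedModule). eexists; apply HD. }
  destruct (HcontC (/ eps)) as [al [Hal Hal2]]. { apply Rinv_0_lt_compat; lra. }
  set (t := Rmax 0 (T - al/2)).
  assert (Ht : 0 <= t < T).
  { unfold t; split; [apply Rmax_l|]. apply Rmax_lub_lt; lra. }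
  assert (HtT : T - t < al).
  { unfold t. pose proof (Rmax_r 0 (T - al/2)). lra. }
  exists T, (/ C T), t, (fun s => / (- C T + C s)).
  assert (HCTp : 0 < C T).
  { assert (0 < 2/delta) by (apply Rdiv_lt_0_compat; lra). lra. }
  assert (Hneg : forall s, 0 <= s < T -> - C T + C s < 0).
  { intros s Hs. pose proof (Hdiff s T ltac:(lra)).
    assert (0 < m * (T - s)) by (apply Rmult_lt_0_compat; lra). lra. }
  split; [|split; [exact Ht|split; [|split]]].
  - split. apply Rinv_0_lt_compat; lra.
    apply Rle_lt_trans with (/ (2/delta)).
    apply Rinv_le_contravar; [apply Rdiv_lt_0_compat; lra|lra].
    rewrite Rinv_div. lra.
  - simpl. rewrite HC0. rewrite Rplus_0_r. apply Rinv_opp.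
  - intros s Hs. specialize (Hneg s Hs).
    assert (H1 : is_derive (fun y => - C T + C y) s (c s)).
    { replace (c s) with (0 + c s) by ring. apply @is_derive_plus.
      apply (@is_derive_const R_AbsRing R_NormedModule). apply HD. }
    pose proof (is_derive_inv _ _ _ H1 ltac:(lra)).
    replace (- (/ (- C T + C s)) ^ 2 * c s) with (- c s / (- C T + C s) ^ 2); [exact H|].
    field; lra.
  - assert (Hb : R_dist (C t) (C T) < / eps).
    { apply Hal2. split. split. exact I. lra.
      simpl; unfold R_dist. rewrite Rabs_left1; lra. }
    simpl in Hb; unfold R_dist in Hb. pose proof (Hneg t Ht).
    rewrite Rabs_left1 in Hb by lra.
    rewrite Rabs_Rinv by lra. rewrite Rabs_left by lra.
    replace eps with (/ / eps) by (field; lra).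
    apply Rinv_le_contravar; [lra|]. lra.
Qed.

Lemma gen (F G H : field3) (c : R -> R) (m : R) :
  (forall t, continuity_pt c t) -> 0 < m -> (forall t, 0 <= t -> c t >= m) ->
  (forall t z, F t 0 0 z = 0) -> (forall t z, G t 0 0 z = 0) ->
  (forall t z, H t 0 0 z = - z^2 * c t) ->
  lyapunov_unstable0 F G H.
Proof.
  intros Hc Hm Hcm HF HG HH Hst.
  destruct (Hst 1 Rlt_0_1) as [delta [Hd Hs]].
  destruct (key c m Hc Hm Hcm 1 delta Rlt_0_1 Hd) as [T [d [t [z [Hd' [Ht [Hz0 [Hz Hzt]]]]]]]].
  assert (Hsol : is_sol3 F G H T (fun _ => 0) (fun _ => 0) z).
  { intros s Hs'. rewrite HF, HG, HH. split; [|split].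
    - apply (@is_derive_const R_AbsRing R_NormedModule).
    - apply (@is_derive_const R_AbsRing R_NormedModule).
    - apply Hz; auto. }
  assert (Hn : forall w, norm3 0 0 w = Rabs w).
  { intro w; unfold norm3. rewrite <- sqrt_Rsqr_abs. f_equal. unfold Rsqr; ring. }
  specialize (Hs T _ _ _ Hsol). rewrite Hn, Hz0 in Hs.
  rewrite Rabs_Ropp, Rabs_pos_eq in Hs by lra.
  specialize (Hs ltac:(lra) t Ht). rewrite Hn in Hs. lra.
Qed.

Theorem theorem3 :
  (* (i) *)
  (forall (a b e : R) (al1 al2 al3 : R -> R),
     cont al1 -> cont al2 -> cont al3 ->
     e = 0 ->
     (exists l, l > -1 /\ forall t, 0 <= t -> al1 t + al2 t >= l) ->
     lyapunov_unstable0 (S5x a b al1 al2 al3) (S5y a b al1 al2 al3)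
                        (S5z e al1 al2)) /\
  (* (ii) *)
  (forall (a b : R) (al1 al2 al3 al4 : R -> R),
     cont al1 -> cont al2 -> cont al3 -> cont al4 ->
     a = 0 ->
     (exists l, l > -1 /\ forall t, 0 <= t -> al1 t + al2 t >= l) ->
     lyapunov_unstable0 (S6x a b al1 al2 al3 al4) (S6y a b al1 al2 al3 al4)
                        (S6z a al1 al2)) /\
  (* (iii) *)
  (forall (a : R) (al1 al2 al3 al4 al5 : R -> R),
     cont al1 -> cont al2 -> cont al3 -> cont al4 -> cont al5 ->
     a = 0 ->
     (exists l, l > -1 /\ forall t, 0 <= t -> al1 t >= l) ->
     lyapunov_unstable0 (S7x a al1 al2 al3 al4 al5) (S7y a al1 al2 al3 al4 al5)
                        (S7z a al1)).
Proof.
  split; [|split].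
  - intros a b e al1 al2 al3 H1 H2 H3 He [l [Hl Hal]]. subst e.
    apply (gen _ _ _ (fun t => 1 + al1 t + al2 t) (1 + l)).
    + intro t. apply continuity_pt_plus; [apply continuity_pt_plus|]; auto.
      apply continuity_pt_const; intros u v; auto.
    + lra.
    + intros t Ht; specialize (Hal t Ht); lra.
    + intros; unfold S5x; ring.
    + intros; unfold S5y; ring.
    + intros; unfold S5z; ring.
  - intros a b al1 al2 al3 al4 H1 H2 H3 H4 Ha [l [Hl Hal]]. subst a.
    apply (gen _ _ _ (fun t => 1 + al1 t + al2 t) (1 + l)).
    + intro t. apply continuity_pt_plus; [apply continuity_pt_plus|]; auto.
      apply continuity_pt_const; intros u v; auto.
    + lra.
    + intros t Ht; specialize (Hal t Ht); lra.
    + intros; unfold S6x; ring.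
    + intros; unfold S6y; ring.
    + intros; unfold S6z; ring.
  - intros a al1 al2 al3 al4 al5 H1 H2 H3 H4 H5 Ha [l [Hl Hal]]. subst a.
    apply (gen _ _ _ (fun t => 1 + al1 t) (1 + l)).
    + intro t. apply continuity_pt_plus; auto.
      apply continuity_pt_const; intros u v; auto.
    + lra.
    + intros t Ht; specialize (Hal t Ht); lra.
    + intros; unfold S7x; ring.
    + intros; unfold S7y; ring.
    + intros; unfold S7z; ring.
Qed.
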